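(* Let $K$ be a field, $S=K[x_1,\ldots,x_n]$, and $\alpha=(k_1,\ldots,k_n)\in\mathbb N^n$. A monomial ideal $I\subset S$ is weakly polymatroidal if and only if its expansion $I^\alpha\subset S^\alpha$ is weakly polymatroidal.
   Context: $\mathbb N$ denotes the positive integers. For $\alpha=(k_1,\ldots,k_n)\in\mathbb N^n$ let $S^\alpha=K[x_{ij}:1\le i\le n,\ 1\le j\le k_i]$ and $P_i=(x_{i1},\ldots,x_{ik_i})\subset S^\alpha$. If $I$ is a monomial ideal with minimal monomial generating set $G(I)=\{\mathbf x^{\mathbf a_1},\ldots,\mathbf x^{\mathbf a_r}\}$, its expansion is $I^\alpha=\sum_{l=1}^r P_1^{\mathbf a_l(1)}\cdots P_n^{\mathbf a_l(n)}\subset S^\alpha$. A monomial ideal $I$ in a polynomial ring $K[x_1,\ldots,x_n]$ is weakly polymatroidal with respect to the ordering $x_1>\cdots>x_n$ if for every two monomials $u=x_1^{a_1}\cdots x_n^{a_n}$ and $v=x_1^{b_1}\cdots x_n^{b_n}$ in $G(I)$ with $a_1=b_1,\ldots,a_{t-1}=b_{t-1}$ and $a_t>b_t$, there exists $j>t$ such that $x_t(v/x_j)\in I$. $I$ is weakly polymatroidal if it is weakly polymatroidal with respect to some ordering of the variables. *)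

(* Defs.v *)
(* Monomial ideals are represented combinatorially by the
   set of exponent vectors of the monomials they contain. *)
From mathcomp Require Import all_boot.
Set Implicit Arguments. Unset Strict Implicit. Unset Printing Implicit Defensive.

Section MonomialIdeals.
Variable V : finType.

(* a monomial x^a is given by its exponent vector a : V -> nat *)
Definition mdivides (a b : V -> nat) : Prop := forall x, a x <= b x.

Definition monset := (V -> nat) -> Prop.

(* a set of monomials is the monomial set of a monomial ideal iff it is
   closed under multiplication by monomials *)
Definition is_monideal (I : monset) : Prop :=
  forall a b, mdivides a b -> I a -> I b.

Definition mingens (I : monset) (a : V -> nat) : Prop :=
  I a /\ forall b, I b -> mdivides b a -> mdivides a b.

Definition mon_unit : monset := fun _ => True.
Definition mon_sum (I J : monset) : monset := fun b => I b \/ J b.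
Definition mon_prod (I J : monset) : monset :=
  fun b => exists u w, [/\ I u, J w & mdivides (fun x => u x + w x) b].
Definition mon_pow (I : monset) (e : nat) : monset := iter e (mon_prod I) mon_unit.

Definition mshift (v : V -> nat) (t j : V) : V -> nat :=
  fun x => (if x == t then 1 else 0) + (v x - (if x == j then 1 else 0)).

(* weakly polymatroidal w.r.t. the ordering of the variables in which
   x_u > x_w iff r u < r w  (r injective, i.e. a total order on V) *)
Definition weakly_polymatroidal_wrt (r : V -> nat) (I : monset) : Prop :=
  forall u v, mingens I u -> mingens I v ->
  forall t, (forall w, r w < r t -> u w = v w) -> v t < u t ->
  exists j, [/\ r t < r j, 0 < v j & I (mshift v t j)].

Definition weakly_polymatroidal (I : monset) : Prop :=
  exists r : V -> nat, injective r /\ weakly_polymatroidal_wrt r I.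
End MonomialIdeals.

(* variables of S^alpha : x_{ij}, 1 <= i <= n, 1 <= j <= k_i *)
Definition expvar (n : nat) (k : 'I_n -> nat) : finType := {i : 'I_n & 'I_(k i)}.

Definition Pideal (n : nat) (k : 'I_n -> nat) (i : 'I_n) : monset (expvar k) :=
  fun b => exists j : 'I_(k i), 0 < b (Tagged (fun i => 'I_(k i)) j).

Definition Pprod (n : nat) (k : 'I_n -> nat) (a : 'I_n -> nat) : monset (expvar k) :=
  foldr (fun i acc => mon_prod (mon_pow (@Pideal n k i) (a i)) acc)
        (@mon_unit (expvar k)) (enum 'I_n).

Definition expansion (n : nat) (k : 'I_n -> nat) (I : monset 'I_n) : monset (expvar k) :=
  fun b => exists a, mingens I a /\ @Pprod n k a b.

(* Main.v *)
Require Import Defs.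
From mathcomp Require Import all_boot.
From mathcomp Require Import zify.
From Stdlib Require Import Classical.
Set Implicit Arguments. Unset Strict Implicit. Unset Printing Implicit Defensive.

Definition bsum (n : nat) (k : 'I_n -> nat) (b : expvar k -> nat) (i : 'I_n) : nat :=
  \sum_(j < k i) b (Tagged (fun i => 'I_(k i)) j).

Lemma bsum_le n (k : 'I_n -> nat) (b c : expvar k -> nat) i :
  (forall x, b x <= c x) -> bsum b i <= bsum c i.
Proof. by move=> H; apply: leq_sum => j _. Qed.

Lemma bsum_add n (k : 'I_n -> nat) (b c : expvar k -> nat) i :
  bsum (fun x => b x + c x) i = bsum b i + bsum c i.
Proof. by rewrite /bsum big_split. Qed.

Lemma sum_delta n (k : 'I_n -> nat) (y : expvar k) i :
  \sum_(j < k i) ((Tagged (fun i => 'I_(k i)) j == y) : nat) = (tag y == i).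
Proof.
case: y => i' j' /=.
case: (eqVneq i' i) => [<-|ne].
  rewrite ?eqxx (bigD1 j') //= ?eqxx big1 ?addn0 // => j /negbTE nj.
  have -> : (Tagged (fun i => 'I_(k i)) j == Tagged (fun i => 'I_(k i)) j') = (j == j')
    by rewrite eq_Tagged.
  by rewrite nj.
rewrite big1 // => j _.
case E: (_ == _) => //.
by move/eqP: E => /(congr1 tag) /= E; rewrite E eqxx in ne.
Qed.

Lemma bsum_add1 n (k : 'I_n -> nat) (b : expvar k -> nat) y i :
  bsum (fun x => b x + (x == y)) i = bsum b i + (tag y == i).
Proof. by rewrite bsum_add /bsum sum_delta. Qed.

Lemma bsum_ext n (k : 'I_n -> nat) (b c : expvar k -> nat) i :
  (forall x, b x = c x) -> bsum b i = bsum c i.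
Proof. by move=> H; apply: eq_bigr => j _. Qed.

Lemma bsum_ext_in n (k : 'I_n -> nat) (b c : expvar k -> nat) i :
  (forall j : 'I_(k i), b (Tagged (fun i => 'I_(k i)) j) = c (Tagged (fun i => 'I_(k i)) j)) ->
  bsum b i = bsum c i.
Proof. by move=> H; apply: eq_bigr => j _. Qed.

Lemma bsum_sub1 n (k : 'I_n -> nat) (b : expvar k -> nat) y i :
  0 < b y -> bsum (fun x => b x - (x == y)) i = bsum b i - (tag y == i).
Proof.
move=> hy.
rewrite (@bsum_ext _ _ b (fun x => (b x - (x == y)) + (x == y))); last first.
  by move=> x; case: (eqVneq x y) => [->|] /=; lia.
by rewrite bsum_add1 addnK.
Qed.

Lemma bsum_mshift n (k : 'I_n -> nat) (v : expvar k -> nat) t s i :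
  0 < v s -> bsum (mshift v t s) i = (tag t == i) + (bsum v i - (tag s == i)).
Proof.
move=> hs.
rewrite (@bsum_ext _ _ _ (fun x => (v x - (x == s)) + (x == t))); last first.
  by move=> x; rewrite /mshift addnC.
by rewrite bsum_add1 bsum_sub1 // addnC.
Qed.

Lemma bsum_pos n (k : 'I_n -> nat) (b : expvar k -> nat) i :
  0 < bsum b i -> exists j : 'I_(k i), 0 < b (Tagged (fun i => 'I_(k i)) j).
Proof.
move=> h; apply: NNPP => hn; move: h.
rewrite lt0n /bsum sum_nat_eq0; apply/negP/negPn/forallP => j; apply/implyP => _.
by rewrite eqn0Ngt; apply/negP => hj; apply: hn; exists j.
Qed.

Lemma sum_strict (I : finType) (F G : I -> nat) x :
  (forall y, F y <= G y) -> F x < G x -> \sum_y F y < \sum_y G y.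
Proof.
move=> H hx; rewrite (bigD1 x) //= [X in _ < X](bigD1 x) //=.
have : \sum_(y | y != x) F y <= \sum_(y | y != x) G y by apply: leq_sum => y _; apply: H.
lia.
Qed.

Lemma pow_P n (k : 'I_n -> nat) i e (b : expvar k -> nat) :
  mon_pow (@Pideal n k i) e b <-> e <= bsum b i.
Proof.
elim: e b => [|e IH] b /=; first by split.
split.
  case=> u [w [[j hj] /IH hw hd]].
  have := @bsum_le _ _ _ _ i hd; rewrite bsum_add.
  have : 0 < bsum u i.
    rewrite /bsum (bigD1 j) //=; lia.
  lia.
move=> h.
have [j hj] : exists j : 'I_(k i), 0 < b (Tagged (fun i => 'I_(k i)) j).
  by apply: bsum_pos; lia.
set y : expvar k := Tagged (fun i => 'I_(k i)) j in hj.
exists (fun x => (x == y : nat)), (fun x => b x - (x == y)); split.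
- by exists j; rewrite eqxx.
- by apply/IH; rewrite bsum_sub1 // /y /= eqxx; lia.
- by move=> x /=; case: (eqVneq x y) => [->|] /=; lia.
Qed.

Lemma foldr_P n (k : 'I_n -> nat) (a : 'I_n -> nat) (l : seq 'I_n) (b : expvar k -> nat) :
  uniq l ->
  foldr (fun i acc => mon_prod (mon_pow (@Pideal n k i) (a i)) acc) (@mon_unit (expvar k)) l b
  <-> (forall i, i \in l -> a i <= bsum b i).
Proof.
elim: l b => [|i l IH] b /=; first by move=> _; split.
move=> /andP [nil ul]; split.
  case=> u [w [/pow_P hu /(IH _ ul) hw hd]] i'.
  rewrite in_cons => /orP [/eqP ->|hi].
    by apply: leq_trans hu _; apply: bsum_le => x; have := hd x; lia.
  by apply: leq_trans (hw _ hi) _; apply: bsum_le => x; have := hd x; lia.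
move=> h.
exists (fun x => if tag x == i then b x else 0), (fun x => if tag x == i then 0 else b x).
split.
- apply/pow_P; rewrite (@bsum_ext_in _ _ _ b); first by apply: h; rewrite mem_head.
  by move=> j /=; rewrite eqxx.
- apply/(IH _ ul) => i' hi.
  rewrite (@bsum_ext_in _ _ _ b); first by apply: h; rewrite in_cons hi orbT.
  move=> j /=; have -> : (i' == i) = false.
    by apply/negP => /eqP E; rewrite -E hi in nil.
  by [].
- by move=> x /=; case: ifP => _ /=; rewrite ?addn0.
Qed.

Lemma Pprod_P n (k : 'I_n -> nat) (a : 'I_n -> nat) (b : expvar k -> nat) :
  @Pprod n k a b <-> (forall i, a i <= bsum b i).
Proof.
rewrite /Pprod foldr_P ?enum_uniq //; split => h i.
  by apply: h; rewrite mem_enum.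
by move=> _; apply: h.
Qed.

Lemma descent (V : finType) (I : monset V) c :
  I c -> exists a, mingens I a /\ mdivides a c.
Proof.
move: {2}(\sum_x c x) (leqnn (\sum_x c x)) => N.
elim: N c => [|N IH] c hN hc.
  exists c; split; last by [].
  split => // b _ hb x.
  have : c x <= 0 by apply: leq_trans hN; rewrite (bigD1 x) //=; lia.
  lia.
case: (classic (mingens I c)) => hm; first by exists c; split => // x.
have [b [hb hbc hcb]] : exists b, [/\ I b, mdivides b c & ~ mdivides c b].
  apply: NNPP => hn; apply: hm; split => // b hb hbc.
  by apply: NNPP => hcb; apply: hn; exists b.
have [x hx] : exists x, b x < c x.
  apply: NNPP => hn; apply: hcb => x; rewrite leqNgt; apply/negP => h; apply: hn; by exists x.
have hs := @sum_strict V b c x hbc hx.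
have [a [ha had]] := IH b (ltnSE (leq_trans hs hN)) hb.
by exists a; split => // y; apply: leq_trans (had y) (hbc y).
Qed.

Lemma expansion_P n (k : 'I_n -> nat) (I : monset 'I_n) (hI : is_monideal I) b :
  @expansion n k I b <-> I (bsum b).
Proof.
split.
  case=> a [[ha _] /Pprod_P hp]; exact: hI ha.
move=> h; have [a [ha had]] := descent h.
by exists a; split => //; apply/Pprod_P.
Qed.

Lemma mingens_P n (k : 'I_n -> nat) (I : monset 'I_n) (hI : is_monideal I) b :
  mingens (@expansion n k I) b <-> mingens I (bsum b).
Proof.
split.
  case=> /(expansion_P hI) hb hmin; split => // c hc hcb.
  apply: NNPP => hn.
  have [i hi] : exists i, c i < bsum b i.
    apply: NNPP => hn'; apply: hn => i; rewrite leqNgt; apply/negP => h; apply: hn'; by exists i.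
  have [j hj] := @bsum_pos _ _ b i (leq_ltn_trans (leq0n _) hi).
  set y : expvar k := Tagged (fun i => 'I_(k i)) j in hj.
  have hb' : @expansion n k I (fun x => b x - (x == y)).
    apply/(expansion_P hI); apply: hI hc => i'.
    rewrite bsum_sub1 // /y /=; have := hcb i'.
    case: (eqVneq i i') => [<-|]; lia.
  have := hmin _ hb' (fun x => leq_subr _ _) y; rewrite eqxx; lia.
case=> hb hmin; split; first by apply/(expansion_P hI).
move=> c /(expansion_P hI) hc hcb.
have hle : forall i, bsum b i <= bsum c i.
  apply: hmin => // i; exact: bsum_le.
case=> i j; rewrite leqNgt; apply/negP => hlt.
have := @sum_strict _ (fun j => c (Tagged (fun i => 'I_(k i)) j))
   (fun j => b (Tagged (fun i => 'I_(k i)) j)) j (fun j => hcb _) hlt.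
move=> h2; have := hle i; rewrite /bsum => h1. have := leq_trans h2 h1. by rewrite ltnn.
Qed.

Lemma I_ext (V : finType) (I : monset V) (hI : is_monideal I) (a b : V -> nat) :
  (forall x, a x = b x) -> I a -> I b.
Proof. by move=> h; apply: hI => x; rewrite h. Qed.

Lemma forward n (k : 'I_n -> nat) (I : monset 'I_n) (hI : is_monideal I) :
  weakly_polymatroidal I -> weakly_polymatroidal (@expansion n k I).
Proof.
case=> r [rinj wp].
pose M := \max_i k i.
have hM : forall x : expvar k, (tagged x : nat) < M.
  by case=> i j /=; apply: leq_trans (ltn_ord j) (@leq_bigmax _ k i).
pose rho (x : expvar k) := r (tag x) * M + tagged x.
have rA : forall x y, r (tag x) < r (tag y) -> rho x < rho y.
  move=> x y h; have := hM x; have := leq_mul h (leqnn M); rewrite /rho mulSn; move: (nat_of_ord (tagged x)) (nat_of_ord (tagged y)) (r (tag x) * M) (r (tag y) * M) => a b c d; lia.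
have rC : forall x y, rho x < rho y -> r (tag x) <= r (tag y).
  move=> x y h; rewrite leqNgt; apply/negP => h'; have := rA _ _ h'; lia.
have rB : forall x y, tag x = tag y -> (rho x < rho y) = ((tagged x : nat) < tagged y).
  by move=> x y e; rewrite /rho; move: (nat_of_ord (tagged x)) (nat_of_ord (tagged y)) => a b; rewrite e ltn_add2l.
exists rho; split.
  case=> i j [i' j'] e.
  have ri : r i = r i'.
    apply/eqP; rewrite eqn_leq.
    apply/andP; split; rewrite leqNgt; apply/negP => h.
    - by have := rA (Tagged (fun i => 'I_(k i)) j') (Tagged (fun i => 'I_(k i)) j) h; rewrite e ltnn.
    - by have := rA (Tagged (fun i => 'I_(k i)) j) (Tagged (fun i => 'I_(k i)) j') h; rewrite e ltnn.
  have ii := rinj _ _ ri; subst i'.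
  move: e; rewrite /rho /= => /eqP; rewrite eqn_add2l => /eqP /val_inj -> //.
move=> u v /(mingens_P hI) hu /(mingens_P hI) hv [i0 j0] hagree hlt.
set t : expvar k := Tagged (fun i => 'I_(k i)) j0 in hagree hlt.
have hagI : forall i, r i < r i0 -> bsum u i = bsum v i.
  move=> i hi; apply: bsum_ext_in => j; apply: hagree; exact: rA.
case: (ltnP (bsum v i0) (bsum u i0)) => hc.
  have [i1 [hr hv1 hI1]] := wp _ _ hu hv i0 hagI hc.
  have [j1 hj1] := bsum_pos hv1.
  exists (Tagged (fun i => 'I_(k i)) j1); split => //.
    exact: rA.
  apply/(expansion_P hI); apply: (I_ext hI) hI1 => i.
  rewrite bsum_mshift //= /mshift eq_sym; congr (_ + (_ - _)).
  by rewrite eq_sym.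
have [j1 [hj01 hj1]] : exists j1 : 'I_(k i0), j0 < j1 /\ 0 < v (Tagged (fun i => 'I_(k i)) j1).
  apply: NNPP => hn.
  have hle : forall j : 'I_(k i0), v (Tagged (fun i => 'I_(k i)) j) <= u (Tagged (fun i => 'I_(k i)) j).
    move=> j; case: (ltngtP j j0) => hj.
    - by rewrite hagree // rB.
    - rewrite leqNgt; apply/negP => hvu; apply: hn; exists j; split => //; lia.
    - have -> : j = j0 by apply: val_inj.
      exact: ltnW.
  have := @sum_strict _ (fun j => v (Tagged (fun i => 'I_(k i)) j))
     (fun j => u (Tagged (fun i => 'I_(k i)) j)) j0 hle hlt.
  move=> h2; have := leq_trans h2 hc; by rewrite ltnn.
exists (Tagged (fun i => 'I_(k i)) j1); split => //.
  by rewrite rB.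
apply/(expansion_P hI); apply: (I_ext hI) (proj1 hv) => i.
rewrite bsum_mshift //=; case: (eqVneq i0 i) => [<-|] /=; last by rewrite subn0.
have : u t <= bsum u i0 by rewrite /bsum (bigD1 j0) //=; apply: leq_addr.
move=> h; have h1 := leq_trans (leq_trans (leq_ltn_trans (leq0n _) hlt) h) hc; by rewrite subnKC.
Qed.

Lemma mingens_ext (V : finType) (I : monset V) (hI : is_monideal I) (a b : V -> nat) :
  (forall x, a x = b x) -> mingens I a -> mingens I b.
Proof.
move=> h [ha hm]; split; first exact: (I_ext hI) ha.
move=> c hc hcb x; rewrite -h; apply: hm => // y; rewrite h; exact: hcb.
Qed.

Lemma backward n (k : 'I_n -> nat) (hk : forall i, 0 < k i) (I : monset 'I_n) (hI : is_monideal I) :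
  weakly_polymatroidal (@expansion n k I) -> weakly_polymatroidal I.
Proof.
case=> rho [rinj wp].
pose c (i : 'I_n) : expvar k := Tagged (fun i => 'I_(k i)) (Ordinal (hk i)).
have tagc : forall i, tag (c i) = i by [].
pose emb (a : 'I_n -> nat) (x : expvar k) := if x == c (tag x) then a (tag x) else 0.
have bemb : forall a i, bsum (emb a) i = a i.
  move=> a i; rewrite /bsum /emb /=.
  rewrite (bigD1 (Ordinal (hk i))) //= eqxx big1 ?addn0 // => j hj.
  by rewrite eq_Tagged /= (negbTE hj).
have memb : forall a, mingens I a -> mingens (@expansion n k I) (emb a).
  move=> a ha; apply/(mingens_P hI); apply: (mingens_ext hI) ha => i.
  by rewrite bemb.
exists (fun i => rho (c i)); split.
  move=> i i' /rinj /(congr1 tag) //.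
move=> u v hu hv t hag hlt.
have h1 : forall w, rho w < rho (c t) -> emb u w = emb v w.
  move=> w; rewrite /emb; case: eqP => [e|] //.
  rewrite {1}e => h; exact: hag.
have h2 : emb v (c t) < emb u (c t) by rewrite /emb tagc eqxx.
have [s [hs hvs hI1]] := wp _ _ (memb _ hu) (memb _ hv) (c t) h1 h2.
have es : s = c (tag s).
  by move: hvs; rewrite /emb; case: eqP.
have hv1 : 0 < v (tag s) by move: hvs; rewrite /emb -es eqxx.
exists (tag s); split => //.
  by rewrite -es.
move/(expansion_P hI): hI1 => hI1.
apply: (I_ext hI) hI1 => i.
by rewrite bsum_mshift // bemb tagc /mshift eq_sym [tag s == i]eq_sym.
Qed.

Theorem theorem1p4 (n : nat) (k : 'I_n -> nat) (hk : forall i, 0 < k i)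
    (I : monset 'I_n) (hI : is_monideal I) :
  weakly_polymatroidal I <-> weakly_polymatroidal (@expansion n k I).
Proof.
split; [exact: forward | exact: backward].
Qed.
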